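(* Let $h:\mathbb{R}^d\to\mathbb{R}^d$ satisfy $\|h(w)-h(w')\|\le\kappa\|w-w'\|$ for all $w,w'$, for some $\kappa\in[0,1)$ and some norm $\|\cdot\|$, and let $w_*$ be its fixed point; set $g(w)=h(w)-w$. Let $\|\cdot\|_m$, $l_{cm}$, $u_{cm}$ be as in the context. Then for any iterate $w_{t_m}$ (indeed for any point $w_{t_m}\in\mathbb{R}^d$), $$\big\langle\nabla\|w_{t_m}-w_*\|_m^2,\;g(w_{t_m})\big\rangle\le-2\Big(1-\frac{u_{cm}}{l_{cm}}\kappa\Big)\|w_{t_m}-w_*\|_m^2.$$
   Context: Moreau envelope construction: fix a norm $\|\cdot\|_s$ on $\mathbb{R}^d$ such that $\frac12\|\cdot\|_s^2$ is $L$-smooth w.r.t. $\|\cdot\|_s$ (e.g. an $\ell_p$ norm with $p\ge2$), and a constant $\xi>0$. Define $M(w)=\inf_{u\in\mathbb{R}^d}\{\frac12\|u\|^2+\frac1{2\xi}\|w-u\|_s^2\}$. It is known that $M$ is differentiable ($\frac L\xi$-smooth w.r.t. $\|\cdot\|_s$) and that there is a norm $\|\cdot\|_m$ with $M(w)=\frac12\|w\|_m^2$; $\nabla\|w\|_m^2$ denotes the gradient of $w\mapsto\|w\|_m^2=2M(w)$. Let $l_{cs},u_{cs}>0$ satisfy $l_{cs}\|w\|_s\le\|w\|\le u_{cs}\|w\|_s$ for all $w$, and set $l_{cm}=\sqrt{1+\xi l_{cs}^2}$, $u_{cm}=\sqrt{1+\xi u_{cs}^2}$, so that $l_{cm}\|w\|_m\le\|w\|\le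 u_{cm}\|w\|_m$. $\langle\cdot,\cdot\rangle$ is the Euclidean inner product. *)

(* Defs.v *)
From HB Require Import structures.
From mathcomp Require Import all_boot all_order all_algebra.
From mathcomp Require Import all_classical all_reals all_analysis.
Set Implicit Arguments. Unset Strict Implicit. Unset Printing Implicit Defensive.
Import Order.TTheory GRing.Theory Num.Theory.
Import numFieldNormedType.Exports.
Local Open Scope classical_set_scope.
Local Open Scope ring_scope.

Section Defs.
Variables (R : realType) (d : nat).

Definition is_norm (N : 'rV[R]_d -> R) : Prop :=
  [/\ (forall x, 0 <= N x),
      (forall x, N x = 0 -> x = 0),
      (forall (a : R) x, N (a *: x) = `|a| * N x) &
      (forall x y, N (x + y) <= N x + N y)].

Definition dotp (u v : 'rV[R]_d) : R := \sum_(i < d) u ord0 i * v ord0 i.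

Definition grad (f : 'rV[R]_d -> R) (x : 'rV[R]_d) : 'rV[R]_d :=
  \row_(i < d) ('D_(delta_mx ord0 i) f x).

Definition L_smooth (N : 'rV[R]_d -> R) (L : R) (f : 'rV[R]_d -> R) : Prop :=
  (forall x, differentiable f x) /\
  (forall x y, f y <= f x + dotp (grad f x) (y - x) + L / 2 * N (y - x) ^+ 2).

Definition moreau (nrm ns : 'rV[R]_d -> R) (xi : R) (w : 'rV[R]_d) : R :=
  inf (range (fun u : 'rV[R]_d => 2^-1 * nrm u ^+ 2 + (2 * xi)^-1 * ns (w - u) ^+ 2)).

(* ||w||_m, determined by M(w) = 1/2 ||w||_m^2 *)
Definition normm (nrm ns : 'rV[R]_d -> R) (xi : R) (w : 'rV[R]_d) : R :=
  Num.sqrt (2 * moreau nrm ns xi w).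

End Defs.

Definition lcm_const (R : realType) (xi lcs : R) : R := Num.sqrt (1 + xi * lcs ^+ 2).
Definition ucm_const (R : realType) (xi ucs : R) : R := Num.sqrt (1 + xi * ucs ^+ 2).

(* Main.v *)
Require Import Defs.
From HB Require Import structures.
From mathcomp Require Import all_boot all_order all_algebra.
From mathcomp Require Import all_classical all_reals all_analysis.
From mathcomp Require Import ring lra.
Import Order.TTheory GRing.Theory Num.Theory.
Import numFieldNormedType.Exports.
Local Open Scope ring_scope.

Section Aux0.
Local Open Scope ring_scope.
Set Implicit Arguments. Unset Strict Implicit.

Lemma phi_ge0 (R : realType) (d : nat) (nrm ns : 'rV[R]_d -> R) (xi : R) w u :
  is_norm nrm -> is_norm ns -> 0 < xi ->
  0 <= 2^-1 * nrm u ^+ 2 + (2 * xi)^-1 * ns (w - u) ^+ 2.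
Proof.
move=> [n0 _ _ _] [s0 _ _ _] xi0.
apply: addr_ge0; apply: mulr_ge0; rewrite ?invr_ge0 ?sqr_ge0 //.
by rewrite mulr_ge0 // ltW.
Qed.

Lemma M_props (R : realType) (d : nat) (nrm ns : 'rV[R]_d -> R) (xi : R) w :
  is_norm nrm -> is_norm ns -> 0 < xi ->
  has_inf (range (fun u : 'rV[R]_d => 2^-1 * nrm u ^+ 2 + (2 * xi)^-1 * ns (w - u) ^+ 2)).
Proof.
move=> Hn Hs xi0; split.
  by exists (2^-1 * nrm 0 ^+ 2 + (2 * xi)^-1 * ns (w - 0) ^+ 2); exists 0.
by exists 0 => _ [u _ <-]; apply: phi_ge0.
Qed.

Lemma M_le (R : realType) (d : nat) (nrm ns : 'rV[R]_d -> R) (xi : R) w u :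
  is_norm nrm -> is_norm ns -> 0 < xi ->
  moreau nrm ns xi w <= 2^-1 * nrm u ^+ 2 + (2 * xi)^-1 * ns (w - u) ^+ 2.
Proof.
move=> Hn Hs xi0; rewrite /moreau; apply: ge_inf; first by case: (M_props w Hn Hs xi0).
by exists u.
Qed.

Lemma M_ge (R : realType) (d : nat) (nrm ns : 'rV[R]_d -> R) (xi : R) w c :
  is_norm nrm -> is_norm ns -> 0 < xi ->
  (forall u, c <= 2^-1 * nrm u ^+ 2 + (2 * xi)^-1 * ns (w - u) ^+ 2) ->
  c <= moreau nrm ns xi w.
Proof.
move=> Hn Hs xi0 H; rewrite /moreau; apply: lb_le_inf.
  by case: (M_props w Hn Hs xi0).
by move=> _ [u _ <-].
Qed.

Lemma M_ge0 (R : realType) (d : nat) (nrm ns : 'rV[R]_d -> R) (xi : R) w :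
  is_norm nrm -> is_norm ns -> 0 < xi -> 0 <= moreau nrm ns xi w.
Proof. by move=> Hn Hs xi0; apply: M_ge => // u; apply: phi_ge0. Qed.

Lemma M_adh (R : realType) (d : nat) (nrm ns : 'rV[R]_d -> R) (xi : R) w e :
  is_norm nrm -> is_norm ns -> 0 < xi -> 0 < e ->
  exists u, 2^-1 * nrm u ^+ 2 + (2 * xi)^-1 * ns (w - u) ^+ 2 < moreau nrm ns xi w + e.
Proof.
move=> Hn Hs xi0 e0; have [_ [u _ <-] H] := inf_adherent e0 (M_props w Hn Hs xi0).
by exists u.
Qed.

End Aux0.

Section Aux1.
Local Open Scope ring_scope.
Set Implicit Arguments. Unset Strict Implicit.

Lemma sq_split (R : realType) (p q l : R) : 0 < l -> l < 1 ->
  (p + q) ^+ 2 <= p ^+ 2 / l + q ^+ 2 / (1 - l).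
Proof.
move=> l0 l1; have l1' : 0 < 1 - l by rewrite subr_gt0.
set a := p ^+ 2 / l; set b := q ^+ 2 / (1 - l).
have ha : a * l = p ^+ 2 by rewrite /a mulfVK // gt_eqF.
have hb : b * (1 - l) = q ^+ 2 by rewrite /b mulfVK // gt_eqF.
have H : 0 <= l * (1 - l) * (a + b - (p + q) ^+ 2).
  have -> : l * (1 - l) * (a + b - (p + q) ^+ 2) = ((1 - l) * p - l * q) ^+ 2.
    rewrite -[X in _ = X ^+ 2]/((1 - l) * p - l * q).
    have -> : l * (1 - l) * (a + b - (p + q) ^+ 2) = (1 - l) * (a * l) + l * (b * (1 - l)) - l * (1 - l) * (p + q) ^+ 2 by ring.
    rewrite ha hb; ring.
  exact: sqr_ge0.
rewrite -subr_ge0; move: H; rewrite pmulr_rge0 //; exact: mulr_gt0.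
Qed.

Lemma tri2 (R : realType) (d : nat) (N : 'rV[R]_d -> R) (A B : R) u v l :
  is_norm N -> 0 < l -> l < 1 ->
  N (A *: u + B *: v) ^+ 2 <= A ^+ 2 * N u ^+ 2 / l + B ^+ 2 * N v ^+ 2 / (1 - l).
Proof.
move=> [N0 _ NZ ND] l0 l1.
have H1 : N (A *: u + B *: v) <= `|A| * N u + `|B| * N v by rewrite -!NZ ND.
have H2 : N (A *: u + B *: v) ^+ 2 <= (`|A| * N u + `|B| * N v) ^+ 2.
  by rewrite lerXn2r ?nnegrE // addr_ge0 // mulr_ge0.
apply: (le_trans H2). have := sq_split (`|A| * N u) (`|B| * N v) l0 l1. idtac.
by rewrite !exprMn !real_normK ?num_real.
Qed.

Lemma M_comb (R : realType) (d : nat) (nrm ns : 'rV[R]_d -> R) (xi : R) (A B l : R) x y :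
  is_norm nrm -> is_norm ns -> 0 < xi -> 0 < l -> l < 1 ->
  moreau nrm ns xi (A *: x + B *: y) <=
    A ^+ 2 * moreau nrm ns xi x / l + B ^+ 2 * moreau nrm ns xi y / (1 - l).
Proof.
move=> Hn Hs xi0 l0 l1; have l1' : 0 < 1 - l by rewrite subr_gt0.
apply/ler_addgt0Pr => e e0.
set K := A ^+ 2 / l + B ^+ 2 / (1 - l) + 1.
have K0 : 0 < K by rewrite /K ltr_wpDl // addr_ge0 // divr_ge0 // ?sqr_ge0 ?ltW.
have eK : 0 < e / K by exact: divr_gt0.
have [u1 Hu1] := M_adh x Hn Hs xi0 eK.
have [u2 Hu2] := M_adh y Hn Hs xi0 eK.
apply: le_trans (M_le _ (A *: u1 + B *: u2) Hn Hs xi0) _.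
have -> : A *: x + B *: y - (A *: u1 + B *: u2) = A *: (x - u1) + B *: (y - u2).
  by rewrite !scalerBr opprD addrACA.
have T1 := tri2 A B u1 u2 Hn l0 l1.
have T2 := tri2 A B (x - u1) (y - u2) Hs l0 l1.
have k0 : 0 <= (2 * xi)^-1 by rewrite invr_ge0 mulr_ge0 // ltW.
have h0 : 0 <= 2^-1 :> R by rewrite invr_ge0.
apply: (le_trans (y := 2^-1 * (A ^+ 2 * nrm u1 ^+ 2 / l + B ^+ 2 * nrm u2 ^+ 2 / (1 - l)) +
   (2 * xi)^-1 * (A ^+ 2 * ns (x - u1) ^+ 2 / l + B ^+ 2 * ns (y - u2) ^+ 2 / (1 - l)))).
  by apply: lerD; apply: ler_wpM2l.
set P1 := 2^-1 * nrm u1 ^+ 2 + (2 * xi)^-1 * ns (x - u1) ^+ 2 in Hu1.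
set P2 := 2^-1 * nrm u2 ^+ 2 + (2 * xi)^-1 * ns (y - u2) ^+ 2 in Hu2.
have -> : 2^-1 * (A ^+ 2 * nrm u1 ^+ 2 / l + B ^+ 2 * nrm u2 ^+ 2 / (1 - l)) +
   (2 * xi)^-1 * (A ^+ 2 * ns (x - u1) ^+ 2 / l + B ^+ 2 * ns (y - u2) ^+ 2 / (1 - l))
   = A ^+ 2 / l * P1 + B ^+ 2 / (1 - l) * P2 by rewrite /P1 /P2; ring.
have a0 : 0 <= A ^+ 2 / l by rewrite divr_ge0 ?sqr_ge0 ?ltW.
have b0 : 0 <= B ^+ 2 / (1 - l) by rewrite divr_ge0 ?sqr_ge0 ?ltW.
apply: (le_trans (y := A ^+ 2 / l * (moreau nrm ns xi x + e / K) +
   B ^+ 2 / (1 - l) * (moreau nrm ns xi y + e / K))).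
  by apply: lerD; apply: ler_wpM2l => //; apply: ltW.
have -> : A ^+ 2 / l * (moreau nrm ns xi x + e / K) + B ^+ 2 / (1 - l) * (moreau nrm ns xi y + e / K)
  = A ^+ 2 * moreau nrm ns xi x / l + B ^+ 2 * moreau nrm ns xi y / (1 - l)
    + (K - 1) * (e / K) by rewrite /K; ring.
rewrite lerD2l mulrBl mul1r mulrC mulfVK ?gt_eqF // gerBl; exact: ltW.
Qed.

End Aux1.

Section Aux2.
Local Open Scope ring_scope.
Set Implicit Arguments. Unset Strict Implicit.

Lemma sq_le (R : realType) (a b : R) : 0 <= a -> a <= b -> a ^+ 2 <= b ^+ 2.
Proof. move=> a0 ab; nra. Qed.

Lemma M_upper (R : realType) (d : nat) (nrm ns : 'rV[R]_d -> R) (xi lcs : R) y :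
  is_norm nrm -> is_norm ns -> 0 < xi -> 0 < lcs ->
  (forall x, lcs * ns x <= nrm x) ->
  2 * moreau nrm ns xi y <= nrm y ^+ 2 / (1 + xi * lcs ^+ 2).
Proof.
move=> Hn Hs xi0 l0 Hl.
set c := xi * lcs ^+ 2.
have c0 : 0 < c by rewrite /c mulr_gt0 // exprn_gt0.
have c1 : 0 < 1 + c by rewrite addr_gt0.
set s := (1 + c)^-1.
have := M_le y (s *: y) Hn Hs xi0.
have -> : y - s *: y = (1 - s) *: y by rewrite scalerBl scale1r.
case: Hs => s0 _ sZ _; case: Hn => n0 _ nZ _.
rewrite sZ nZ => H.
have e : 1 - s = c / (1 + c) by rewrite /s; field; rewrite gt_eqF.
move: H; rewrite e; rewrite /s.
set n := nrm y; set S := ns y.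
have Sn : lcs * S <= n by exact: Hl.
have S0 : 0 <= S by exact: s0.
have ha : `|(1 + c)^-1| = (1 + c)^-1 by rewrite ger0_norm // invr_ge0 ltW.
have hb : `|c / (1 + c)| = c / (1 + c) by rewrite ger0_norm // divr_ge0 // ltW.
rewrite ha hb => H.
have E : 2 * (2^-1 * ((1 + c)^-1 * n) ^+ 2 + (2 * xi)^-1 * (c / (1 + c) * S) ^+ 2)
   = (n ^+ 2 + xi * lcs ^+ 2 * (lcs * S) ^+ 2) / (1 + c) ^+ 2.
  rewrite /c; field; apply/andP; split; rewrite gt_eqF //.
have H' : 2 * moreau nrm ns xi y <= (n ^+ 2 + xi * lcs ^+ 2 * (lcs * S) ^+ 2) / (1 + c) ^+ 2.
  by rewrite -E ler_pM2l.
apply: le_trans H' _.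
have -> : n ^+ 2 / (1 + c) = (n ^+ 2 + xi * lcs ^+ 2 * n ^+ 2) / (1 + c) ^+ 2.
  rewrite /c; field; rewrite -/c gt_eqF //.
rewrite ler_pM2r ?invr_gt0 ?exprn_gt0 // lerD2l (ler_pM2l c0).
have lS0 : 0 <= lcs * S by rewrite mulr_ge0 // ltW.
nra.
Qed.

Lemma M_lower (R : realType) (d : nat) (nrm ns : 'rV[R]_d -> R) (xi ucs : R) x :
  is_norm nrm -> is_norm ns -> 0 < xi -> 0 < ucs ->
  (forall x, nrm x <= ucs * ns x) ->
  nrm x ^+ 2 / (1 + xi * ucs ^+ 2) <= 2 * moreau nrm ns xi x.
Proof.
move=> Hn Hs xi0 u0 Hu.
set C := xi * ucs ^+ 2.
have C0 : 0 < C by rewrite /C mulr_gt0 // exprn_gt0.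
have C1 : 0 < 1 + C by rewrite addr_gt0.
rewrite -ler_pdivrMl // mulrC.
apply: M_ge => // u.
have l0 : 0 < (1 + C)^-1 by rewrite invr_gt0.
have l1 : (1 + C)^-1 < 1 by rewrite invf_lt1 // ltrDl.
case: (Hn) => n0 _ _ nD.
have tri : nrm x <= nrm u + nrm (x - u).
  by have := nD u (x - u); rewrite addrC subrK.
have sq := sq_split (nrm u) (nrm (x - u)) l0 l1.
have e1 : 1 - (1 + C)^-1 = C / (1 + C) by field; rewrite gt_eqF.
rewrite e1 in sq.
have sq2 : nrm x ^+ 2 <= (nrm u + nrm (x - u)) ^+ 2.
  by apply: sq_le.
have bS : nrm (x - u) ^+ 2 <= ucs ^+ 2 * ns (x - u) ^+ 2.
  by rewrite -exprMn; apply: sq_le.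
set a := nrm u in sq sq2 *; set b := nrm (x - u) in sq sq2 bS *.
set S := ns (x - u) in bS *.
have H : nrm x ^+ 2 <= a ^+ 2 * (1 + C) + b ^+ 2 * (1 + C) / C.
  apply: le_trans sq2 (le_trans sq _).
  rewrite le_eqVlt; apply/orP; left; apply/eqP; field.
  by apply/andP; split; rewrite gt_eqF.
have H2 : b ^+ 2 * (1 + C) / C <= S ^+ 2 / xi * (1 + C).
  rewrite mulrAC ler_pM2r // ler_pdivrMr //.
  have -> : S ^+ 2 / xi * C = ucs ^+ 2 * S ^+ 2 by rewrite /C; field; rewrite gt_eqF.
  exact: bS.
have : nrm x ^+ 2 <= (a ^+ 2 + S ^+ 2 / xi) * (1 + C).
  by apply: le_trans H _; rewrite mulrDl lerD2l.
move=> H3.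
have -> : 2^-1 * a ^+ 2 + (2 * xi)^-1 * S ^+ 2 = 2^-1 * (a ^+ 2 + S ^+ 2 / xi).
  field; rewrite gt_eqF //.
rewrite [X in _ <= X]mulrC ler_pM2r ?invr_gt0 // ler_pdivrMr //.
Qed.

End Aux2.

Section Aux3.
Local Open Scope ring_scope.
Local Open Scope classical_set_scope.
Set Implicit Arguments. Unset Strict Implicit.

Lemma dot_grad (R : realType) (d : nat) (F : 'rV[R]_d -> R) w v :
  differentiable F w -> dotp (grad F w) v = 'D_v F w.
Proof.
move=> dF; rewrite deriveE // {2}(row_sum_delta v) linear_sum /dotp.
apply: eq_bigr => i _; rewrite mxE linearZ /= deriveE // mulrC.
by [].
Qed.

Lemma deriv_le (R : realType) (d : nat) (F : 'rV[R]_d -> R) w v C :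
  derivable F w v ->
  (forall eps, 0 < eps -> \forall t \near 0^'+, t^-1 *: (F (t *: v + w) - F w) <= C + eps) ->
  'D_v F w <= C.
Proof.
move=> dF H; apply/ler_addgt0Pr => e e0.
have e2 : 0 < e / 2 by rewrite divr_gt0.
have cv : (fun h : R => h^-1 *: ((F \o shift w) (h *: v) - F w)) x @[x --> 0^'] --> 'D_v F w.
  exact: dF.
have cv' := cvg_dnbhs_at_right cv.
move/cvgrPdist_le: cv' => /(_ _ e2) P1.
have P2 := H _ e2.
have [t [h1 h2]] := filter_ex (filterI P1 P2).
move: h1 h2 => /= h1 h2.
have h4 := le_trans (ler_norm _) h1.
lra.
Qed.

End Aux3.

Section Aux4.
Local Open Scope ring_scope.
Set Implicit Arguments. Unset Strict Implicit.

Lemma real_step (R : realType) (X B Mz t g eps : R) :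
  0 < t -> 0 < g -> t < (2 * g)^-1 -> t < eps / (2 * X * (g - 1) ^+ 2 + 1) ->
  0 <= X -> 0 <= B -> 0 < eps ->
  Mz <= (1 - t) ^+ 2 * X / (1 - t * g) + t ^+ 2 * B / (1 - (1 - t * g)) ->
  t^-1 * (Mz - X) <= X * (g - 2) + B / g + eps.
Proof.
move=> t0 g0 tg tK X0 B0 e0 H.
have K0 : 0 < 2 * X * (g - 1) ^+ 2 + 1 by rewrite ltr_wpDl // mulr_ge0 // ?sqr_ge0 // mulr_ge0.
have tg' : t * g < 2^-1.
  by move: tg; rewrite invfM ltr_pdivlMr // mulrC.
have l0 : 0 < 1 - t * g by lra.
have tK' : t * (2 * X * (g - 1) ^+ 2 + 1) < eps by rewrite -ltr_pdivlMr.
have E1 : t ^+ 2 * B / (1 - (1 - t * g)) = t * (B / g).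
  have q0 : 0 < 1 - (1 - t * g) by rewrite subKr mulr_gt0.
  by field; rewrite !gt_eqF.
rewrite E1 in H.
rewrite mulrC ler_pdivrMr //.
have E2 : (1 - t) ^+ 2 * X / (1 - t * g) =
   X + t * (X * (g - 2)) + (t ^+ 2 * X * (g - 1) ^+ 2) / (1 - t * g).
  by field; rewrite gt_eqF.
rewrite E2 in H.
have H3 : (t ^+ 2 * X * (g - 1) ^+ 2) / (1 - t * g) <= t * eps.
  rewrite ler_pdivrMr //.
  have : t * X * (g - 1) ^+ 2 * 2 <= eps - t.
    have -> : t * X * (g - 1) ^+ 2 * 2 = t * (2 * X * (g - 1) ^+ 2 + 1) - t by ring.
    lra.
  move=> h.
  have h' : t * (t * X * (g - 1) ^+ 2 * 2) <= t * (eps - t) by rewrite ler_pM2l.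
  have h2 : 0 <= t * X * (g - 1) ^+ 2 by rewrite mulr_ge0 ?sqr_ge0 // mulr_ge0 // ltW.
  have h3 : t ^+ 2 * X * (g - 1) ^+ 2 <= t * eps * 2^-1.
    have -> : t ^+ 2 * X * (g - 1) ^+ 2 = (t * (t * X * (g - 1) ^+ 2 * 2)) * 2^-1 by field.
    rewrite ler_pM2r ?invr_gt0 //; apply: le_trans h' _.
    rewrite ler_pM2l // lerBlDr lerDl ltW //.
  apply: le_trans h3 _.
  rewrite ler_pM2l ?mulr_gt0 //; lra.
lra.
Qed.

Lemma real_final (R : realType) (D X B a : R) :
  0 <= X -> 0 <= a -> B <= a ^+ 2 * X ->
  (forall g, 0 < g -> D <= X * (g - 2) + B / g) ->
  D <= - 2 * (1 - a) * X.
Proof.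
move=> X0 a0 BX H; apply/ler_addgt0Pr => e e0.
have X1 : 0 < X + 1 by lra.
set de := e / (X + 1).
have de0 : 0 < de by rewrite divr_gt0.
have g0 : 0 < a + de by lra.
apply: le_trans (H _ g0) _.
have h1 : B / (a + de) <= a * X.
  rewrite ler_pdivrMr //.
  apply: le_trans BX _.
  have : 0 <= a * X * de by apply: mulr_ge0; [apply: mulr_ge0 | apply: ltW].
  have -> : a * X * (a + de) = a ^+ 2 * X + a * X * de by ring.
  lra.
have h2 : X * de <= e.
  rewrite /de mulrA ler_pdivrMr //; nra.
have -> : X * (a + de - 2) = X * (a - 2) + X * de by ring.
have -> : - 2 * (1 - a) * X + e = X * (a - 2) + a * X + e by ring.
lra.
Qed.

End Aux4.

Theorem lemma4 (R : realType) (d : nat) (nrm ns : 'rV[R]_d -> R)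
  (L xi lcs ucs kappa : R) (h : 'rV[R]_d -> 'rV[R]_d) (wstar w : 'rV[R]_d) :
  is_norm nrm -> is_norm ns ->
  0 < L -> L_smooth ns L (fun x => 2^-1 * ns x ^+ 2) ->
  0 < xi -> 0 < lcs -> 0 < ucs ->
  (forall x, lcs * ns x <= nrm x /\ nrm x <= ucs * ns x) ->
  (forall x, differentiable (moreau nrm ns xi) x) ->
  0 <= kappa -> kappa < 1 ->
  (forall x y, nrm (h x - h y) <= kappa * nrm (x - y)) ->
  h wstar = wstar ->
  dotp (grad (fun x => normm nrm ns xi (x - wstar) ^+ 2) w) (h w - w)
    <= - 2 * (1 - ucm_const xi ucs / lcm_const xi lcs * kappa)
         * normm nrm ns xi (w - wstar) ^+ 2.
Proof.
move=> Hn Hs _ _ xi0 lc0 u0 Hlu HM k0 k1 Hh hfix.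
set M := moreau nrm ns xi.
have HF : (fun x => normm nrm ns xi (x - wstar) ^+ 2) = (fun x => 2 * M (x - wstar)).
  apply/funext => z; rewrite /normm sqr_sqrtr // mulr_ge0 //; exact: M_ge0.
have dF : differentiable (fun x => 2 * M (x - wstar)) w.
  have -> : (fun x => 2 * M (x - wstar)) = 2 *: (M \o (fun z => z - wstar)) by apply/funext.
  apply: differentiableZ; apply: differentiable_comp; last exact: HM.
  apply: differentiableB => //.
rewrite HF dot_grad // /normm sqr_sqrtr ?mulr_ge0 ?M_ge0 //.
set a := ucm_const xi ucs / lcm_const xi lcs * kappa.
have a0 : 0 <= a.
  apply: mulr_ge0 => //; apply: divr_ge0; exact: sqrtr_ge0.
have P0 : 0 < 1 + xi * lcs ^+ 2 by rewrite addr_gt0 // mulr_gt0 // exprn_gt0.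
have Q0 : 0 < 1 + xi * ucs ^+ 2 by rewrite addr_gt0 // mulr_gt0 // exprn_gt0.
have a2 : a ^+ 2 = (1 + xi * ucs ^+ 2) / (1 + xi * lcs ^+ 2) * kappa ^+ 2.
  by rewrite /a /ucm_const /lcm_const exprMn expr_div_n !sqr_sqrtr // ltW.
set X := 2 * M (w - wstar); set B := 2 * M (h w - wstar).
have X0 : 0 <= X by rewrite mulr_ge0 // M_ge0.
have B0 : 0 <= B by rewrite mulr_ge0 // M_ge0.
have BX : B <= a ^+ 2 * X.
  have h1 : B <= nrm (h w - wstar) ^+ 2 / (1 + xi * lcs ^+ 2).
    by apply: M_upper => // z; case: (Hlu z).
  have h2 : nrm (h w - wstar) ^+ 2 <= kappa ^+ 2 * nrm (w - wstar) ^+ 2.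
    rewrite -exprMn; apply: sq_le; first by case: Hn.
    by rewrite -{1}hfix.
  have h3 : nrm (w - wstar) ^+ 2 <= X * (1 + xi * ucs ^+ 2).
    rewrite -ler_pdivrMr //; apply: M_lower => // z; case: (Hlu z) => //.
  apply: le_trans h1 _; rewrite ler_pdivrMr // a2.
  apply: le_trans h2 _.
  have -> : (1 + xi * ucs ^+ 2) / (1 + xi * lcs ^+ 2) * kappa ^+ 2 * X * (1 + xi * lcs ^+ 2)
     = kappa ^+ 2 * (X * (1 + xi * ucs ^+ 2)) by field; rewrite gt_eqF.
  by rewrite ler_wpM2l // sqr_ge0.
apply: (real_final X0 a0 BX) => g g0.
apply: deriv_le; first exact: diff_derivable.
move=> eps e0.
have K0 : 0 < 2 * X * (g - 1) ^+ 2 + 1 by rewrite ltr_wpDl // mulr_ge0 ?sqr_ge0 // mulr_ge0.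
near=> t.
have t0 : 0 < t by near: t; exact: nbhs_right_gt.
have tg : t < (2 * g)^-1 by near: t; apply: nbhs_right_lt; rewrite invr_gt0 mulr_gt0.
have tK : t < eps / (2 * X * (g - 1) ^+ 2 + 1) by near: t; apply: nbhs_right_lt; rewrite divr_gt0.
rewrite /=.
apply: real_step => //.
have tg' : t * g < 2^-1 by move: tg; rewrite invfM ltr_pdivlMr // mulrC.
have l0 : 0 < 1 - t * g by lra.
have l1 : 1 - t * g < 1 by rewrite gtrBl mulr_gt0.
have -> : t *: (h w - w) + w - wstar = (1 - t) *: (w - wstar) + t *: (h w - wstar).
  by apply/matrixP => i j; rewrite !mxE; ring.
have := M_comb (1 - t) t (w - wstar) (h w - wstar) Hn Hs xi0 l0 l1.
rewrite -/M => H.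
have -> : (1 - t) ^+ 2 * X / (1 - t * g) + t ^+ 2 * B / (1 - (1 - t * g)) =
  2 * ((1 - t) ^+ 2 * M (w - wstar) / (1 - t * g) + t ^+ 2 * M (h w - wstar) / (1 - (1 - t * g))).
  by rewrite /X /B; ring.
by rewrite ler_pM2l.
Unshelve. all: end_near.
Qed.
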